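(* Let $G$ be a simple cubic graph on vertex set $[n]$ with girth at least $16$, let $A$ be a MAI set of $G$, $B=V(G)\setminus A$, and let $Y$ (resp. $Z$) be the set of vertices of degree $1$ in $G[A]$ (resp. $G[B]$). Let $J$ be the set of edges of $G$ with one end in $Y$ and the other in $Z$ (under these hypotheses $J$ is a matching). Let $H=H(A)$ be the graph with vertex set $J$ in which two distinct elements $yz, y'z'\in J$ ($y,y'\in Y$, $z,z'\in Z$) are adjacent if $yy'\in E(G)$ or $zz'\in E(G)$. Then $G$ has at least $I(H)$ distinct MAI sets.
   Context: A vertex set $A$ of a graph $G$ is an AI set (almost independent set) if $\Delta(G[A])\le 1$, i.e. every component of the induced subgraph $G[A]$ is a single vertex or a single edge. A vertex set $A$ is a MAI set (maximum almost independent set) of $G$ if (M1) $A$ is an AI set, (M2) $A$ contains an independent set of size $\alpha(G)$, and (M3) $A$ has maximum cardinality among all vertex sets satisfying (M1) and (M2). For a graph $H$, $I(H)$ denotes the total number of independent sets of $H$, including the empty set. *)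

(* Defs.v *)
From mathcomp Require Import all_boot.
Set Implicit Arguments. Unset Strict Implicit. Unset Printing Implicit Defensive.

Section Graph.
Variables (V : finType) (e : rel V).

Definition simple_graph := symmetric e /\ irreflexive e.

Definition nbhd (v : V) : {set V} := [set w | e v w].

Definition cubic := forall v : V, #|nbhd v| = 3.

(* every cycle (uniq seq, consecutive adjacent, closing edge) of length >= 3
   has length >= g *)
Definition girth_at_least (g : nat) :=
  forall s : seq V, uniq s -> cycle e s -> 3 <= size s -> g <= size s.

Definition independent (S : {set V}) := [forall x in S, forall y in S, ~~ e x y].

Definition alpha := \max_(S : {set V} | independent S) #|S|.

Definition deg_in (A : {set V}) (v : V) := #|nbhd v :&: A|.

Definition AI_set (A : {set V}) := forall v, v \in A -> deg_in A v <= 1.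

Definition AI_with_max_indep (A : {set V}) :=
  AI_set A /\ exists2 S : {set V}, S \subset A & independent S /\ #|S| = alpha.

Definition MAI_set (A : {set V}) :=
  AI_with_max_indep A /\ forall A' : {set V}, AI_with_max_indep A' -> #|A'| <= #|A|.

Definition deg1 (A : {set V}) : {set V} := [set v in A | deg_in A v == 1].

(* J: edges yz with y in Y (deg 1 in G[A]) and z in Z (deg 1 in G[B]),
   recorded as ordered pairs (y, z); since Y and Z are disjoint, each such
   edge corresponds to exactly one pair. *)
Definition Jset (A : {set V}) : {set V * V} :=
  [set p | [&& p.1 \in deg1 A, p.2 \in deg1 (~: A) & e p.1 p.2]].

Definition H_adj (p q : V * V) := (p != q) && (e p.1 q.1 || e p.2 q.2).

(* I(H(A)): number of independent sets of H(A), including the empty set *)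
Definition IH (A : {set V}) : nat :=
  #|[set S : {set V * V} | (S \subset Jset A) &&
      [forall p in S, forall q in S, ~~ H_adj p q]]|.

End Graph.

(* Main.v *)
Require Import Defs.
From mathcomp Require Import all_boot.
Set Implicit Arguments. Unset Strict Implicit. Unset Printing Implicit Defensive.

Section Proof.
Variables (V : finType) (e : rel V).
Hypothesis esym : symmetric e.
Hypothesis eirr : irreflexive e.
Hypothesis cub : cubic e.
Hypothesis notri : forall a b c, e a b -> e b c -> e c a -> False.

Lemma le1 (S : {set V}) : (forall x y, x \in S -> y \in S -> x = y) -> #|S| <= 1.
Proof.
move=> H; rewrite leqNgt; apply/negP => /card_gt1P [x [y [Hx Hy /eqP]]]; apply; exact: H.
Qed.

Lemma three_le (S : {set V}) a b c : a \in S -> b \in S -> c \in S ->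
  a != b -> b != c -> c != a -> 2 < #|S|.
Proof. by move=> *; apply/card_gt2P; exists a, b, c; split; split. Qed.

Lemma neq_of_e a b : e a b -> a != b.
Proof. by move=> H; apply/eqP => E; rewrite E eirr in H. Qed.

Lemma card_disjU (A1 A2 : {set V}) : (forall x, x \in A1 -> x \in A2 -> False) ->
  #|A1 :|: A2| = #|A1| + #|A2|.
Proof.
move=> H; have := cardsUI A1 A2.
have -> : A1 :&: A2 = set0.
  by apply/setP => x; rewrite inE in_set0; apply/negP => /andP [] /H H1 /H1.
by rewrite cards0 addn0.
Qed.

Lemma indepP (S : {set V}) : independent e S -> forall x y, x \in S -> y \in S -> ~~ e x y.
Proof. by move=> /forall_inP H x y Hx Hy; have /forall_inP := H x Hx; apply. Qed.

Lemma indepI (S : {set V}) : (forall x y, x \in S -> y \in S -> ~~ e x y) -> independent e S.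
Proof. move=> H; apply/forall_inP => x Hx; apply/forall_inP => y Hy; exact: H. Qed.

Lemma indep_le (S : {set V}) : independent e S -> #|S| <= alpha e.
Proof. by move=> H; apply: (@leq_bigmax_cond _ (independent e) (fun S => #|S|)). Qed.

Lemma two_elems (S : {set V}) a b k : #|S| = 2 -> a \in S -> b \in S -> k \in S ->
  a != b -> (k == a) || (k == b).
Proof.
move=> HS Ha Hb Hk Hab; apply/negPn/negP; rewrite negb_or => /andP [Hka Hkb].
have : 2 < #|S| by apply: (three_le Ha Hb Hk Hab _ Hka); rewrite eq_sym.
by rewrite HS.
Qed.

Variable A : {set V}.
Hypothesis AI : AI_set e A.

Lemma ai_uniq p x1 x2 : p \in A -> x1 \in A -> x2 \in A -> e p x1 -> e p x2 -> x1 = x2.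
Proof.
move=> Hp H1 H2 E1 E2; apply/eqP; apply/negPn/negP => Hne.
have := AI Hp; rewrite /deg_in leqNgt => /negP; apply; apply/card_gt1P.
by exists x1, x2; split => //; rewrite !inE ?E1 ?E2 ?H1 ?H2.
Qed.

Definition partner v := odflt v [pick w in nbhd e v :&: A].

Lemma partnerP v : deg_in e A v = 1 -> partner v \in A /\ e v (partner v).
Proof.
rewrite /deg_in /partner => H.
case: pickP => [w | H0]; first by rewrite !inE => /andP [-> ->].
have : #|nbhd e v :&: A| = 0 by apply: eq_card0 => w; exact: H0.
by rewrite H.
Qed.

Lemma deg2 z : z \notin A -> deg_in e (~: A) z = 1 -> deg_in e A z = 2.
Proof.
move=> _ H; have := cardsID A (nbhd e z); rewrite setDE cub.
move: H; rewrite /deg_in => ->; by rewrite addn1 => [[]].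
Qed.

Variable I : {set V}.
Hypothesis IA : I \subset A.
Hypothesis Iind : independent e I.

Lemma swap (X : {set V}) : X \subset A -> (forall x, x \in X -> deg_in e A x = 1) ->
  (forall x y, x \in X -> y \in X -> ~~ e x y) ->
  exists K : {set V}, [/\ K \subset A :\: X, independent e K & #|K| = #|I|].
Proof.
move=> XA Xd Xn.
set P := [set partner x | x in I :&: X].
exists ((I :\: X) :|: P).
have PA : forall x, x \in X -> partner x \in A /\ e x (partner x).
  by move=> x /Xd; apply partnerP.
have PnX : forall x, x \in X -> partner x \notin X.
  by move=> x Hx; apply/negP => Hp; have := Xn _ _ Hx Hp; rewrite (PA x Hx).2.
have PnI : forall x, x \in I -> x \in X -> partner x \notin I.
  by move=> x HI Hx; apply/negP => Hp; have := indepP Iind HI Hp; rewrite (PA x Hx).2.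
have Puniq : forall x w, x \in X -> w \in A -> e (partner x) w -> w = x.
  move=> x w Hx Hw E; have [H1 H2] := PA x Hx.
  by apply: (ai_uniq H1 Hw (subsetP XA _ Hx) E); rewrite esym.
split.
- apply/subsetP => v; rewrite in_setU in_setD => /orP [/andP [Hv1 Hv] | ].
    by rewrite in_setD Hv1 (subsetP IA _ Hv).
  move=> /imsetP [x]; rewrite in_setI => /andP [HxI HxX] ->.
  by rewrite in_setD PnX // (PA x HxX).1.
- apply: indepI => u v; rewrite !in_setU !in_setD.
  move=> /orP [/andP [HuX HuI] | /imsetP [x Hx ->]] /orP [/andP [HvX HvI] | /imsetP [y Hy ->]].
  + have := indepP Iind HuI HvI; by [].
  + apply/negP => E; rewrite esym in E.
    move: Hy; rewrite in_setI => /andP [HyI HyX].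
    by have Eu := Puniq y u HyX (subsetP IA _ HuI) E; rewrite Eu HyX in HuX.
  + apply/negP => E.
    move: Hx; rewrite in_setI => /andP [HxI HxX].
    by have Eu := Puniq x v HxX (subsetP IA _ HvI) E; rewrite Eu HxX in HvX.
  + apply/negP => E.
    move: Hx Hy; rewrite !in_setI => /andP [HxI HxX] /andP [HyI HyX].
    have Ey := Puniq x (partner y) HxX (PA y HyX).1 E.
    by have := Xn _ _ HyX HxX; rewrite -Ey (PA y HyX).2.
- rewrite card_disjU; last first.
    move=> x; rewrite in_setD => /andP [_ HxI] /imsetP [y]; rewrite in_setI => /andP [HyI HyX] Ex.
    by move: HxI; rewrite Ex (negbTE (PnI y HyI HyX)).
  rewrite card_in_imset; first by rewrite addnC cardsID.
  move=> x y; rewrite !in_setI => /andP [HxI HxX] /andP [HyI HyX] Exy.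
  symmetry; apply: (Puniq x y HxX (subsetP XA _ HyX)).
  by rewrite Exy esym (PA y HyX).2.
Qed.

Lemma memN (S : {set V}) v w : (w \in nbhd e v :&: S) = e v w && (w \in S).
Proof. by rewrite !inE. Qed.

Hypothesis Ialpha : #|I| = alpha e.

Lemma setX2 (a b : V) : a \in A -> b \in A -> deg_in e A a = 1 -> deg_in e A b = 1 ->
  ~~ e a b ->
  exists K : {set V}, [/\ K \subset A :\: [set a; b], independent e K & #|K| = alpha e].
Proof.
move=> Ha Hb Da Db Nab; rewrite -Ialpha; apply: swap.
- by apply/subsetP => x; rewrite !inE => /orP [] /eqP ->.
- by move=> x; rewrite !inE => /orP [] /eqP ->.
- move=> x y; rewrite !inE => /orP [] /eqP -> /orP [] /eqP ->; rewrite ?eirr //.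
  by rewrite esym.
Qed.

Lemma F1 z a b : z \notin A -> deg_in e A z = 2 -> a \in A -> b \in A ->
  deg_in e A a = 1 -> deg_in e A b = 1 -> e z a -> e z b -> a = b.
Proof.
move=> Hz Dz Ha Hb Da Db Ea Eb; apply/eqP/negPn/negP => Hab.
have Nab : ~~ e a b by apply/negP => E; apply: (notri Ea E); rewrite esym.
have [K [KX Kind Kc]] := setX2 Ha Hb Da Db Nab.
have Nz : forall k, k \in K -> ~~ e z k.
  move=> k Hk; apply/negP => Ek.
  move: (subsetP KX _ Hk); rewrite in_setD !inE negb_or => /andP [/andP [Hka Hkb] HkA].
  have := two_elems (S := nbhd e z :&: A) (a := a) (b := b) (k := k) Dz.
  rewrite !memN Ea Eb Ek Ha Hb HkA (negbTE Hka) (negbTE Hkb).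
  by move=> /(_ isT isT isT Hab).
have zK : z \notin K.
  by apply/negP => /(subsetP KX); rewrite in_setD (negbTE Hz) andbF.
have : independent e (z |: K).
  apply: indepI => u v; rewrite !in_setU1.
  move=> /orP [/eqP -> | Hu] /orP [/eqP -> | Hv].
  - by rewrite eirr.
  - exact: Nz.
  - by rewrite esym; apply: Nz.
  - by have := indepP Kind Hu Hv.
move=> /indep_le; rewrite cardsU1 zK Kc add1n ltnn; by [].
Qed.

Lemma F2 u z1 z2 y1 y2 : u \in A -> deg_in e A u = 0 -> z1 != z2 ->
  z1 \notin A -> z2 \notin A -> deg_in e A z1 = 2 -> deg_in e A z2 = 2 ->
  e u z1 -> e u z2 -> y1 \in A -> y2 \in A -> deg_in e A y1 = 1 -> deg_in e A y2 = 1 ->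
  e z1 y1 -> e z2 y2 -> ~~ e y1 y2 -> False.
Proof.
move=> Hu Du Hz12 Hz1 Hz2 Dz1 Dz2 Eu1 Eu2 Hy1 Hy2 Dy1 Dy2 E1 E2 N12.
have [K [KX Kind Kc]] := setX2 Hy1 Hy2 Dy1 Dy2 N12.
have gen : forall z y k, z \notin A -> deg_in e A z = 2 -> e u z -> e z y -> y \in A ->
    deg_in e A y = 1 -> k \in K :\ u -> y \in [set y1; y2] -> ~~ e z k.
  move=> z y k Hz Dz Euz Ezy Hy Dy Hk Hyin; apply/negP => Ek.
  move: Hk; rewrite in_setD1 => /andP [Hku HkK].
  move: (subsetP KX _ HkK); rewrite in_setD => /andP [HkX HkA].
  have Hyu : y != u by apply/eqP => E; move: Dy; rewrite E Du.
  have := two_elems (S := nbhd e z :&: A) (a := y) (b := u) (k := k) Dz.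
  rewrite !memN Ezy Ek Hy Hu HkA (negbTE Hku) esym Euz /=.
  have -> : (k == y) = false by apply/negP => /eqP E; move: HkX; rewrite E Hyin.
  by move=> /(_ isT isT isT Hyu).
have N12z : ~~ e z1 z2 by apply/negP => E; apply: (notri Eu1 E); rewrite esym.
have : independent e ((K :\ u) :|: [set z1; z2]).
  apply: indepI => a b; rewrite !(in_setU _ (K :\ u)).
  have Hz : forall z k, z \in [set z1; z2] -> k \in K :\ u -> ~~ e z k.
    move=> z k; rewrite !inE => /orP [] /eqP -> Hk.
    - by apply: (gen z1 y1) => //; rewrite !inE ?eqxx.
    - by apply: (gen z2 y2) => //; rewrite !inE ?eqxx ?orbT.
  move=> /orP [Ha | Ha] /orP [Hb | Hb].
  - by apply: (indepP Kind); [move: Ha | move: Hb]; rewrite in_setD1 => /andP [].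
  - by rewrite esym; apply: Hz.
  - by apply: Hz.
  - move: Ha Hb; rewrite !inE => /orP [] /eqP -> /orP [] /eqP ->; rewrite ?eirr //.
    by rewrite esym.
move=> /indep_le; rewrite card_disjU; last first.
  move=> x; rewrite in_setD1 !inE => /andP [_ HxK] /orP [] /eqP Ex.
  - by move: (subsetP KX _ HxK); rewrite Ex in_setD (negbTE Hz1) andbF.
  - by move: (subsetP KX _ HxK); rewrite Ex in_setD (negbTE Hz2) andbF.
rewrite cards2 Hz12 -Kc (cardsD1 u K).
by rewrite [_ + true.+1]addnC leq_add2r; case: (u \in K).
Qed.

Hypothesis Amax : forall A', AI_with_max_indep e A' -> #|A'| <= #|A|.

Lemma JsetP p : p \in Jset e A ->
  [/\ p.1 \in A, deg_in e A p.1 = 1, p.2 \notin A, deg_in e A p.2 = 2 & e p.1 p.2].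
Proof.
rewrite inE /deg1 !inE => /and3P [/andP [H1 /eqP D1] /andP [H2 /eqP D2] E].
by split => //; apply: deg2.
Qed.

Section S.
Variable S : {set V * V}.
Hypothesis SJ : S \subset Jset e A.
Hypothesis Sind : forall p q, p \in S -> q \in S -> ~~ H_adj e p q.

Definition YS := [set p.1 | p in S].
Definition ZS := [set p.2 | p in S].
Definition AS := (A :\: YS) :|: ZS.

Lemma SP p : p \in S ->
  [/\ p.1 \in A, deg_in e A p.1 = 1, p.2 \notin A, deg_in e A p.2 = 2 & e p.1 p.2].
Proof. by move=> Hp; apply: JsetP; apply: (subsetP SJ). Qed.

Lemma nH p q : p \in S -> q \in S -> p != q -> ~~ e p.1 q.1 /\ ~~ e p.2 q.2.
Proof.
move=> Hp Hq Hne; have := Sind Hp Hq; rewrite /H_adj Hne /= negb_or.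
by case/andP.
Qed.

Lemma pair_eq p q : p \in S -> q \in S -> p.2 = q.2 -> p = q.
Proof.
move=> Hp Hq E.
have [a1 d1 z1 dz1 e1] := SP Hp; have [a2 d2 z2 dz2 e2] := SP Hq.
have E1 : p.1 = q.1.
  apply: (F1 (z := p.2)) => //; first by rewrite esym.
  by rewrite E esym.
by rewrite [p]surjective_pairing [q]surjective_pairing E1 E.
Qed.

Lemma YSP p : p \in S -> p.1 \in YS.
Proof. by move=> Hp; apply/imsetP; exists p. Qed.
Lemma ZSP p : p \in S -> p.2 \in ZS.
Proof. by move=> Hp; apply/imsetP; exists p. Qed.

Lemma AS_AI : AI_set e AS.
Proof.
move=> v; rewrite in_setU in_setD => /orP [/andP [HvY HvA] | /imsetP [p Hp ->]].
- apply: le1 => w1 w2.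
  have [D0|D1] : deg_in e A v = 0 \/ deg_in e A v = 1.
    by move: (AI HvA); case: (deg_in e A v) => [|[|]]; auto.
  + have Wz : forall w, w \in nbhd e v :&: AS -> exists2 q, q \in S & w = q.2.
      move=> w; rewrite memN in_setU in_setD.
      move=> /andP [Ew /orP [/andP [_ HwA] | /imsetP [q Hq ->]]]; last by exists q.
      exfalso; have : 0 < deg_in e A v by apply/card_gt0P; exists w; rewrite memN Ew HwA.
      by rewrite D0.
    move=> H1 H2.
    have [q1 Hq1 Ew1] := Wz _ H1; have [q2 Hq2 Ew2] := Wz _ H2.
    move: H1 H2; rewrite !memN => /andP [Ev1 _] /andP [Ev2 _].
    apply/eqP/negPn/negP => Hne.
    have Hq : q1 != q2 by apply/eqP => E; move: Hne; rewrite Ew1 Ew2 E eqxx.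
    have [N1 _] := nH Hq1 Hq2 Hq.
    have [a1 d1 z1 dz1 e1] := SP Hq1; have [a2 d2 z2 dz2 e2] := SP Hq2.
    apply: (F2 (u := v) (z1 := q1.2) (z2 := q2.2) (y1 := q1.1) (y2 := q2.1)) => //.
    * by rewrite -Ew1 -Ew2.
    * by rewrite -Ew1.
    * by rewrite -Ew2.
    * by rewrite esym.
    * by rewrite esym.
  + have WA : forall w, w \in nbhd e v :&: AS -> w \in A /\ e v w.
      move=> w; rewrite memN in_setU in_setD.
      move=> /andP [Ew /orP [/andP [_ HwA] | /imsetP [q Hq Ewq]]]; first by [].
      exfalso; have [a1 d1 z1 dz1 e1] := SP Hq.
      have Evq : v = q.1.
        apply: (F1 (z := q.2)) => //; last by rewrite esym.
        by rewrite esym -Ewq.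
      by move: HvY; rewrite Evq YSP.
    move=> /WA [H1 E1] /WA [H2 E2]; exact: (ai_uniq HvA H1 H2 E1 E2).
- have [a1 d1 z1 dz1 e1] := SP Hp.
  have WA : forall w, w \in nbhd e p.2 :&: AS -> [/\ w \in A, e p.2 w & w != p.1].
    move=> w; rewrite memN in_setU in_setD.
    move=> /andP [Ew /orP [/andP [HwY HwA] | /imsetP [q Hq Ewq]]].
      split => //; apply/eqP => E; by move: HwY; rewrite E YSP.
    exfalso; have Hpq : p != q by apply/eqP => E; move: Ew; rewrite Ewq E eirr.
    have [_ N] := nH Hp Hq Hpq; by move: N; rewrite -Ewq Ew.
  apply: le1 => w1 w2 /WA [H1 E1 N1] /WA [H2 E2 N2].
  have := two_elems (S := nbhd e p.2 :&: A) (a := p.1) (b := w1) (k := w2) dz1.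
  have e1' : e p.2 p.1 by rewrite esym.
  rewrite !memN e1' a1 E1 H1 E2 H2 (negbTE N2) /= eq_sym N1.
  by move=> /(_ isT isT isT isT) /eqP.
Qed.

Lemma AS_M2 : exists2 K : {set V}, K \subset AS & independent e K /\ #|K| = alpha e.
Proof.
have [K [KX Kind Kc]] : exists K : {set V}, [/\ K \subset A :\: YS, independent e K & #|K| = #|I|].
  apply: swap.
  - by apply/subsetP => x /imsetP [p Hp ->]; have [] := SP Hp.
  - by move=> x /imsetP [p Hp ->]; have [] := SP Hp.
  - move=> x y /imsetP [p Hp ->] /imsetP [q Hq ->].
    have [Hpq|Hpq] := eqVneq p q; first by rewrite Hpq eirr.
    by have [] := nH Hp Hq Hpq.
exists K; last by rewrite Kc.
by apply: (subset_trans KX); apply: subsetUl.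
Qed.

Lemma AS_card : #|A| <= #|AS|.
Proof.
rewrite /AS card_disjU; last first.
  move=> x; rewrite in_setD => /andP [_ HxA] /imsetP [p Hp Ex].
  by have [] := SP Hp; rewrite -Ex HxA.
rewrite -(cardsID YS A) addnC leq_add2l.
apply: (leq_trans (subset_leq_card (subsetIr A YS))).
apply: (leq_trans (leq_imset_card _ _)).
rewrite card_in_imset //.
move=> p q Hp Hq; exact: pair_eq.
Qed.

Lemma AS_MAI : MAI_set e AS.
Proof.
split; first by split; [exact: AS_AI | exact: AS_M2].
by move=> A' HA'; apply: (leq_trans (Amax HA')); exact: AS_card.
Qed.

Lemma S_recover : S = [set p in Jset e A | p.2 \in AS].
Proof.
apply/setP => p; rewrite inE; apply/idP/idP.
  by move=> Hp; rewrite (subsetP SJ _ Hp) /AS in_setU ZSP ?orbT.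
move=> /andP [HpJ]; rewrite in_setU in_setD => /orP [/andP [_ HA] | /imsetP [q Hq Ew]].
  by have [] := JsetP HpJ; rewrite HA.
have [a1 d1 z1 dz1 e1] := JsetP HpJ; have [a2 d2 z2 dz2 e2] := SP Hq.
have E1 : p.1 = q.1.
  apply: (F1 (z := p.2)) => //; first by rewrite esym.
  by rewrite Ew esym.
by rewrite [p]surjective_pairing E1 Ew -surjective_pairing.
Qed.

End S.

Lemma final : exists s : seq {set V},
    [/\ uniq s, (forall A', A' \in s -> MAI_set e A') & IH e A <= size s].
Proof.
set HS := [set S : {set V * V} | (S \subset Jset e A) &&
      [forall p in S, forall q in S, ~~ H_adj e p q]].
have HSP : forall S, S \in HS -> S \subset Jset e A /\
    (forall p q, p \in S -> q \in S -> ~~ H_adj e p q).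
  move=> S; rewrite inE => /andP [H1 /forall_inP H2]; split => // p q Hp Hq.
  by have /forall_inP := H2 p Hp; apply.
exists (map AS (enum HS)); split.
- rewrite map_inj_in_uniq ?enum_uniq // => S1 S2; rewrite !mem_enum => /HSP [J1 I1] /HSP [J2 I2] E.
  by rewrite (S_recover J1) (S_recover J2) E.
- move=> A' /mapP [S]; rewrite mem_enum => /HSP [J1 I1] ->; exact: AS_MAI.
- by rewrite size_map -cardE.
Qed.

End Proof.


Theorem lemma9 (n : nat) (e : rel 'I_n) (A : {set 'I_n}) :
  simple_graph e -> cubic e -> girth_at_least e 16 -> MAI_set e A ->
  exists s : seq {set 'I_n},
    [/\ uniq s, (forall A', A' \in s -> MAI_set e A') & IH e A <= size s].
Proof.
move=> [Hs Hi] Hc Hg [[HAI [I IA [Iind Ia]]] Hmax].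
have notri : forall a b c, e a b -> e b c -> e c a -> False.
  move=> a b c Eab Ebc Eca.
  have := Hg [:: a; b; c]; rewrite /cycle /= !inE negb_or.
  rewrite (neq_of_e Hi Eab) (neq_of_e Hi Ebc) eq_sym (neq_of_e Hi Eca) Eab Ebc Eca.
  by move=> /(_ isT isT isT).
exact: (final Hs Hi Hc notri HAI IA Iind Ia Hmax).
Qed.
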